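(* Let $n,k$ be integers with $1\le k<n/2$ and let $\gamma\in\mathrm{Aut}(\mathrm{DGP}(n,k))$. If $\gamma$ stabilizes any of $\mathcal{O},\mathcal{I},\mathcal{S}$ setwise, then it stabilizes $\mathcal{S}$ setwise. Moreover, if $\gamma$ stabilizes $\mathcal{S}$ setwise and either $n$ is odd or $k$ is even, then either $\gamma$ stabilizes each of $\mathcal{O}$ and $\mathcal{I}$ setwise, or $\gamma$ interchanges $\mathcal{O}$ and $\mathcal{I}$.
   Context: $\mathrm{GP}(n,k)$ ($1\le k<n/2$) has vertices $u_0,\dots,u_{n-1},v_0,\dots,v_{n-1}$ and edges $\{u_i,u_{i+1}\},\{u_i,v_i\},\{v_i,v_{i+k}\}$ (subscripts mod $n$). $\mathrm{DGP}(n,k)$ is its canonical double cover: vertex set $\{(u_i,j),(v_i,j): 0\le i\le n-1,\ j\in\{0,1\}\}$ and edges $\{(u_i,j),(u_{i+1},1-j)\}$, $\{(u_i,j),(v_i,1-j)\}$, $\{(v_i,j),(v_{i+k},1-j)\}$ for all $i$ (mod $n$) and $j\in\{0,1\}$. Let $\mathcal{O}=\{\{(u_i,j),(u_{i+1},1-j)\}\}$ (outer edges), $\mathcal{I}=\{\{(v_i,j),(v_{i+k},1-j)\}\}$ (inner edges), $\mathcal{S}=\{\{(u_i,j),(v_i,1-j)\}\}$ (spokes), over all $i\in\{0,\dots,n-1\}$, $j\in\{0,1\}$. *)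

(* Defs.v *)
From mathcomp Require Import all_boot all_fingroup.
Unset Printing Implicit Defensive.

(* Vertices of DGP(n,k): (inl i, j) is (u_i, j), (inr i, j) is (v_i, j),
   with i : 'I_n (indices mod n) and layer j : bool (false = 0, true = 1). *)
Definition dgp_vertex (n : nat) : finType := (('I_n + 'I_n) * bool)%type.

(* Edge sets as symmetric boolean relations: x ~ y iff {x,y} is an edge. *)

Definition outer_edge (n : nat) : rel (dgp_vertex n) := fun x y =>
  match x, y with
  | (inl i, j), (inl i', j') =>
      (j' == ~~ j) && (((i + 1) %% n == i') || ((i' + 1) %% n == i))
  | _, _ => false
  end.

Definition inner_edge (n k : nat) : rel (dgp_vertex n) := fun x y =>
  match x, y with
  | (inr i, j), (inr i', j') =>
      (j' == ~~ j) && (((i + k) %% n == i') || ((i' + k) %% n == i))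
  | _, _ => false
  end.

Definition spoke_edge (n : nat) : rel (dgp_vertex n) := fun x y =>
  match x, y with
  | (inl i, j), (inr i', j') => (i == i') && (j' == ~~ j)
  | (inr i, j), (inl i', j') => (i == i') && (j' == ~~ j)
  | _, _ => false
  end.

Definition dgp_adj (n k : nat) : rel (dgp_vertex n) := fun x y =>
  [|| outer_edge n x y, inner_edge n k x y | spoke_edge n x y].

Definition is_dgp_aut (n k : nat) (g : {perm dgp_vertex n}) : Prop :=
  forall x y, dgp_adj n k (g x) (g y) = dgp_adj n k x y.

Definition stabilizes (n : nat) (g : {perm dgp_vertex n}) (E : rel (dgp_vertex n)) : Prop :=
  forall x y, E (g x) (g y) = E x y.

Definition interchanges (n : nat) (g : {perm dgp_vertex n}) (E1 E2 : rel (dgp_vertex n)) : Prop :=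
  (forall x y, E2 (g x) (g y) = E1 x y) /\ (forall x y, E1 (g x) (g y) = E2 x y).

(* Main.v *)
Require Import Defs.
From mathcomp Require Import all_boot all_fingroup.

Definition isU {n} (x : dgp_vertex n) : bool := match x with (inl _, _) => true | _ => false end.

Lemma O_isU n (a b : dgp_vertex n) : outer_edge n a b -> isU a.
Proof. by case: a b => [[?|?] ?] [[?|?] ?]. Qed.

Lemma I_isU n k (a b : dgp_vertex n) : inner_edge n k a b -> ~~ isU a.
Proof. by case: a b => [[?|?] ?] [[?|?] ?]. Qed.

Lemma O_nb m (x : dgp_vertex m.+1) : isU x -> exists y, outer_edge m.+1 x y.
Proof.
case: x => [[i|i] j] //= _.
exists (inl (inord ((i + 1) %% m.+1)), ~~ j).
by rewrite /= eqxx inordK ?ltn_mod // eqxx.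
Qed.

Lemma I_nb m k (x : dgp_vertex m.+1) : ~~ isU x -> exists y, inner_edge m.+1 k x y.
Proof.
case: x => [[i|i] j] //= _.
exists (inr (inord ((i + k) %% m.+1)), ~~ j).
by rewrite /= eqxx inordK ?ltn_mod // eqxx.
Qed.

Lemma stab_P n (g : {perm dgp_vertex n}) (E : rel (dgp_vertex n)) (P : pred (dgp_vertex n)) :
  (forall a b, E a b -> P a) -> (forall x, P x -> exists y, E x y) ->
  stabilizes n g E -> forall x, P (g x) = P x.
Proof.
move=> EP nb st x; apply/idP/idP => Px.
- have [z Ez] := nb _ Px. apply: (EP _ (g^-1 z)%g). by rewrite -st permKV.
- have [y Ey] := nb _ Px. apply: (EP _ (g y)). by rewrite st.
Qed.

Lemma S_char n k (x y : dgp_vertex n) :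
  spoke_edge n x y = dgp_adj n k x y && (isU x != isU y).
Proof.
by case: x y => [[?|?] ?] [[?|?] ?]; rewrite /dgp_adj /= ?(orbF, andbT, andbF, andbN).
Qed.

Lemma C_char n k (x y : dgp_vertex n) :
  (outer_edge n x y || inner_edge n k x y) = dgp_adj n k x y && ~~ spoke_edge n x y.
Proof.
by case: x y => [[?|?] ?] [[?|?] ?]; rewrite /dgp_adj /= ?(orbF, andbT, andbF, andbN).
Qed.

Lemma O_char n k (x y : dgp_vertex n) :
  outer_edge n x y = (outer_edge n x y || inner_edge n k x y) && isU x.
Proof.
by case: x y => [[?|?] ?] [[?|?] ?]; rewrite /= ?(orbF, andbT, andbF, andbN).
Qed.

Lemma I_char n k (x y : dgp_vertex n) :
  inner_edge n k x y = (outer_edge n x y || inner_edge n k x y) && ~~ isU x.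
Proof.
by case: x y => [[?|?] ?] [[?|?] ?]; rewrite /= ?(orbF, andbT, andbF, andbN).
Qed.

Lemma S_diff n (x y : dgp_vertex n) : spoke_edge n x y -> isU y = ~~ isU x.
Proof. by case: x y => [[?|?] ?] [[?|?] ?]. Qed.

Lemma C_same n k (x y : dgp_vertex n) :
  outer_edge n x y || inner_edge n k x y -> isU y = isU x.
Proof. by case: x y => [[?|?] ?] [[?|?] ?]. Qed.

Lemma conn m k (h : dgp_vertex m.+1 -> bool) :
  (forall x y, spoke_edge _ x y -> h x = h y) ->
  (forall x y, outer_edge _ x y || inner_edge _ k x y -> h x = h y) ->
  odd m.+1 || ~~ odd k -> forall x, h x = h (inl ord0, false).
Proof.
move=> hS hC hpar.
pose u i j : dgp_vertex m.+1 := (inl (inord (i %% m.+1)), j).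
pose v i j : dgp_vertex m.+1 := (inr (inord (i %% m.+1)), j).
have s1 i j : h (u i j) = h (u i.+1 (~~ j)).
  apply: hC; rewrite /= eqxx /= !inordK ?ltn_mod // modnDml addn1 eqxx //.
have s2 i j : h (u i j) = h (u 0 (j (+) odd i)).
  elim: i j => [|i IH] j; first by rewrite addbF.
  by rewrite -[j in LHS]negbK -s1 IH /= addbN addNb.
have s3 j : u m.+1 j = u 0 j by rewrite /u modnn mod0n.
have sp i j : h (u i j) = h (v i (~~ j)).
  by apply: hS; rewrite /= !eqxx.
have inn i j : h (v i j) = h (v (i + k) (~~ j)).
  apply: hC; rewrite /= eqxx /= !inordK ?ltn_mod // modnDml eqxx //.
have key : h (u 0 true) = h (u 0 false).
  case/orP: hpar => hp.
    by rewrite -s3 s2 hp.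
  symmetry; rewrite (sp 0 false) /= (inn 0 true) add0n /= -(sp k true) s2.
  by rewrite (negbTE hp).
have allu i j : h (u i j) = h (u 0 false).
  by rewrite s2; case: (j (+) odd i) => //.
have e0 : h (inl ord0, false) = h (u 0 false).
  by congr h; congr pair; congr inl; apply/val_inj; rewrite /= inordK.
rewrite e0.
case=> [[i|i] j].
  have -> : (inl i, j) = u i j.
    by rewrite /u modn_small ?ltn_ord // inord_val.
  exact: allu.
have -> : (inr i, j) = v i (~~ ~~ j).
  by rewrite /v negbK modn_small ?ltn_ord // inord_val.
by rewrite -sp allu.
Qed.

Theorem lemma5p1 (n k : nat) (hk1 : 1 <= k) (hkn : 2 * k < n)
    (g : {perm dgp_vertex n}) (hg : is_dgp_aut n k g) :
  ((stabilizes n g (outer_edge n) \/ stabilizes n g (inner_edge n k) \/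
    stabilizes n g (spoke_edge n)) -> stabilizes n g (spoke_edge n)) /\
  (stabilizes n g (spoke_edge n) -> (odd n \/ ~~ odd k) ->
     (stabilizes n g (outer_edge n) /\ stabilizes n g (inner_edge n k)) \/
     interchanges n g (outer_edge n) (inner_edge n k)).
Proof.
case: n hkn g hg => [|m] hkn g hg; first by [].
split.
  move=> [stO|[stI|stS]] //.
    have U := @stab_P _ g _ _ (@O_isU _) (@O_nb m) stO.
    by move=> x y; rewrite !(S_char _ k) hg !U.
  have U0 := @stab_P _ g _ (fun x => ~~ isU x) (@I_isU _ k) (@I_nb m k) stI.
  have U x : isU (g x) = isU x by apply: negb_inj; apply: U0.
  by move=> x y; rewrite !(S_char _ k) hg !U.
move=> stS hpar.
have Cp x y : (outer_edge _ (g x) (g y) || inner_edge _ k (g x) (g y)) =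
              (outer_edge _ x y || inner_edge _ k x y).
  by rewrite !C_char hg stS.
pose h x := isU (g x) == isU x.
have hS x y : spoke_edge _ x y -> h x = h y.
  move=> sxy; have sgxy : spoke_edge _ (g x) (g y) by rewrite stS.
  by rewrite /h (S_diff _ _ _ sxy) (S_diff _ _ _ sgxy); case: (isU x); case: (isU (g x)).
have hC x y : outer_edge _ x y || inner_edge _ k x y -> h x = h y.
  move=> cxy; have cgxy : outer_edge _ (g x) (g y) || inner_edge _ k (g x) (g y) by rewrite Cp.
  by rewrite /h (C_same _ _ _ _ cxy) (C_same _ _ _ _ cgxy).
have hp : odd m.+1 || ~~ odd k by case: hpar => ->; rewrite ?orbT.
have hall := @conn m k h hS hC hp.
case E: (h (inl ord0, false)); [left|right].
  have U x : isU (g x) = isU x by apply/eqP; rewrite -/(h x) hall E.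
  by split=> x y; rewrite [LHS](O_char _ k) + rewrite [LHS](I_char _ k); rewrite Cp U -?O_char -?I_char.
have U x : isU (g x) = ~~ isU x.
  by move: (hall x); rewrite E /h; case: (isU x); case: (isU (g x)).
split=> x y.
  by rewrite [LHS](I_char _ k) Cp U negbK -O_char.
by rewrite [LHS](O_char _ k) Cp U -I_char.
Qed.
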